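(* Let $n\geq 2$. For every integer $k$ with $0\leq k\leq (n-2)!$ there exists a u-word for $n$-permutations with incomparable elements at distance $n-1$ (in the sense defined in the context) of length $n!+(1-k)(n-1)$. In other words, such u-words exist of each of the lengths $n!+n-1,\ n!,\ n!-(n-1),\ \ldots,\ n!-(n-1)!+n-1$.
   Context: An $n$-permutation is a permutation $\pi=\pi_1\cdots\pi_n$ of $\{1,\ldots,n\}$. Let $w=w_1\cdots w_n$ be a word of length $n$ over the positive integers, where letters may repeat; equal letters are treated as incomparable. The word $w$ covers the $n$-permutation $\pi$ if for all $i,j\in\{1,\ldots,n\}$, $w_i<w_j$ implies $\pi_i<\pi_j$ (that is, $\pi$ is a linear extension of the partial order on positions induced by $w$, in which positions holding equal letters are incomparable). For example, $112$ covers $123$ and $213$. A u-word (universal word) for $n$-permutations is a finite word $u=u_1\cdots u_N$ over the positive integers with $N\geq n$ such that every $n$-permutation is covered by exactly one of the $N-n+1$ factors $u_iu_{i+1}\cdots u_{i+n-1}$, $1\leq i\leq N-n+1$. The u-word uses incomparable elements at distance $n-1$ if whenever $u_i=u_j$ with $i<j$, we have $j-i\geq n-1$ (so inside any factor of length $n$ only the first and last letters can be equal). *)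

(* Defs.v *)
From mathcomp Require Import all_boot all_order all_algebra.
Set Implicit Arguments.
Unset Strict Implicit.
Unset Printing Implicit Defensive.

(* Words are finite sequences of naturals; positions are 0-indexed. *)

Definition is_nperm (n : nat) (p : seq nat) : bool := perm_eq p (iota 1 n).

Definition pos_word (u : seq nat) : bool := all (fun x => 0 < x) u.

Definition covers (w p : seq nat) : bool :=
  (size w == size p) &&
  [forall i : 'I_(size w), forall j : 'I_(size w),
     (nth 0 w i < nth 0 w j) ==> (nth 0 p i < nth 0 p j)].

Definition factor (u : seq nat) (i n : nat) : seq nat := take n (drop i u).

Definition uword (n : nat) (u : seq nat) : Prop :=
  pos_word u /\ n <= size u /\
  forall p : seq nat, is_nperm n p ->
    count (fun i => covers (factor u i n) p) (iota 0 (size u - n).+1) = 1.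

(* Incomparable elements at distance n-1: equal letters at positions i < j
   satisfy j - i >= n - 1. *)
Definition dist_incomp (n : nat) (u : seq nat) : Prop :=
  forall i j : nat, i < j < size u -> nth 0 u i = nth 0 u j -> n - 1 <= j - i.

(* Main.v *)
Require Import Defs.
From mathcomp Require Import all_boot all_order all_algebra zify.
Set Implicit Arguments.
Unset Strict Implicit.
Unset Printing Implicit Defensive.

Fixpoint walk (T V : eqType) (src dst : T -> V) (v : V) (c : seq T) (w : V) : bool :=
  match c with
  | [::] => v == w
  | e :: c' => (src e == v) && walk src dst (dst e) c' w
  end.

Lemma walk_rcons (T V : eqType) (src dst : T -> V) v c f :
  walk src dst v c (src f) -> walk src dst v (rcons c f) (dst f).
Proof.
elim: c v => [|e c IH] v /=; first by move=> /eqP->; rewrite !eqxx.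
by case/andP=> -> /IH.
Qed.

Lemma chain_count (T V : eqType) (src dst : T -> V) v e p :
  path (fun a b => dst a == src b) e p ->
  count (fun x => src x == v) (e :: p) + (dst (last e p) == v) =
  count (fun x => dst x == v) (e :: p) + (src e == v).
Proof.
elim: p e => [|f p IH] e /=; first by rewrite addn0 addn0 addnC.
case/andP=> /eqP Ref Hp; have := IH f Hp; rewrite /= Ref; lia.
Qed.

Lemma exists_notin (T : eqType) (P : pred T) (es T0 : seq T) :
  uniq es -> count P T0 < count P es -> exists2 e, e \in es & P e && (e \notin T0).
Proof.
move=> Ues Hlt; case: (boolP (has (fun e => P e && (e \notin T0)) es)).
  by case/hasP=> e He HP; exists e.
move/hasPn=> H; exfalso.
have : size (filter P es) <= size (filter P T0).
  apply: uniq_leq_size; first exact: filter_uniq.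
  move=> x; rewrite !mem_filter => /andP[Px xin]; rewrite Px /=.
  by have := H x xin; rewrite Px /= negbK.
by rewrite !size_filter leqNgt Hlt.
Qed.

Lemma count_sub_uniq (T : eqType) (P : pred T) (es T0 : seq T) :
  uniq T0 -> {subset T0 <= es} -> count P T0 <= count P es.
Proof.
move=> U S; rewrite -!size_filter; apply: uniq_leq_size; first exact: filter_uniq.
by move=> x; rewrite !mem_filter => /andP[-> /S].
Qed.

Lemma last_rotS (T : Type) (x0 : T) s i : i < size s -> last x0 (rot i.+1 s) = nth x0 s i.
Proof.
move=> Hi; rewrite /rot (take_nth x0) // last_cat last_rcons //.
Qed.

Lemma cycle_sorted (T : Type) (r : rel T) s : cycle r s -> sorted r s.
Proof. by case: s => // x p; rewrite /= rcons_path => /andP[]. Qed.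

Lemma find_exit (T V : eqType) (src dst : T -> V) (T0 : seq T) c v w :
  (exists2 e0, e0 \in T0 & dst e0 == v) -> walk src dst v c w ->
  has (fun x => x \notin T0) c ->
  exists g, [/\ g \in c, g \notin T0 & exists2 e0, e0 \in T0 & dst e0 == src g].
Proof.
elim: c v => [|e c IH] v //= He /andP[/eqP se Hw].
case: (boolP (e \in T0)) => /= eT Hh.
  have [g [g1 g2 g3]] := IH (dst e) (ex_intro2 _ _ e eT (eqxx _)) Hw Hh.
  by exists g; split => //; rewrite inE g1 orbT.
exists e; split => //; first by rewrite inE eqxx.
by case: He => e0 H1 H2; exists e0 => //; rewrite se.
Qed.

Lemma euler (T V : eqType) (src dst : T -> V) (es : seq T) :
  uniq es ->
  (forall v, count (fun e => src e == v) es = count (fun e => dst e == v) es) ->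
  (forall e f, e \in es -> f \in es ->
     exists c, all (mem es) c /\ walk src dst (dst e) c (src f)) ->
  exists s, perm_eq s es /\ sorted (fun a b => dst a == src b) s.
Proof.
set R := (fun a b => dst a == src b).
move=> Ues Hbal Hcon.
case Hes: es => [|e0 es']; first by exists [::].
rewrite -Hes.
have e0in : e0 \in es by rewrite Hes inE eqxx.
pose valid (s : seq T) := [&& s != [::], uniq s, all (mem es) s & sorted R s].
suff ext : forall s, valid s ->
   (perm_eq s es /\ sorted R s) \/ exists s2, valid s2 /\ size s2 = (size s).+1.
  suff : forall b s, size es - size s <= b -> valid s -> exists s, perm_eq s es /\ sorted R s.
    move=> /(_ (size es) [:: e0]); apply => //; [lia | by rewrite /valid /= e0in].
  elim=> [|b IH] s Hb Hv; case: (ext s Hv) => [H|[s2 [Hv2 Hs2]]]; try by exists s.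
    case/and4P: Hv2 => _ U2 A2 _.
    have : size s2 <= size es by apply: uniq_leq_size => // x /(allP A2).
    lia.
  by apply: (IH s2) => //; lia.
move=> s /and4P[]; case: s => // e p _ Us As Ss.
have sub : {subset e :: p <= es} by move=> x /(allP As).
case: (boolP (dst (last e p) == src e)) => Hcl.
  case: (boolP (all (mem (e :: p)) es)) => Hall.
    left; split => //; apply: uniq_perm => // x; apply/idP/idP; first exact: sub.
    by move/(allP Hall).
  right; case/allPn: Hall => f fin fnot.
  have lin : last e p \in es by apply: sub; rewrite mem_last.
  have [c [Ac Wc]] := Hcon _ _ lin fin.
  have Wc2 := walk_rcons Wc.
  have Hh : has (fun x => x \notin e :: p) (rcons c f) by apply/hasP; exists f => //; rewrite mem_rcons inE eqxx.
  have [g [gin gnot [e1 e1in e1g]]] := find_exit (ex_intro2 _ _ (last e p) (mem_last _ _) (eqxx _)) Wc2 Hh.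
  have gies : g \in es by move: gin; rewrite mem_rcons inE => /orP[/eqP->|/(allP Ac)].
  set i := index e1 (e :: p).
  have ilt : i < size (e :: p) by rewrite index_mem.
  have Sp : path R e p := Ss.
  have Cy : cycle R (rot i.+1 (e :: p)) by rewrite rot_cycle /= rcons_path Sp.
  exists (rcons (rot i.+1 (e :: p)) g); split; last by rewrite size_rcons size_rot.
  apply/and4P; split.
  - by case: (rot _ _).
  - by rewrite rcons_uniq rot_uniq Us mem_rot gnot.
  - by rewrite all_rcons (eq_all_r (mem_rot _ _)) As andbT; exact: gies.
  - move: Cy (last_rotS e ilt); rewrite nth_index //.
    case: (rot _ _) => //= x q Cy Hl.
    rewrite rcons_path; apply/andP; split; first by move: Cy; rewrite /= rcons_path => /andP[].
    by rewrite Hl.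
right.
set v := dst (last e p).
have Hc := chain_count v Ss.
have Hne : (src e == v) = false by rewrite eq_sym; exact: negbTE Hcl.
rewrite eqxx Hne /= in Hc.
have H1 : count (fun x => src x == v) (e :: p) < count (fun x => src x == v) es.
  rewrite Hbal; have := count_sub_uniq (fun x => dst x == v) Us sub; move: Hc => /=; lia.
have [f fin /andP[/eqP fs fnot]] := exists_notin Ues H1.
exists (rcons (e :: p) f); split; last by rewrite size_rcons.
apply/and4P; split.
- by [].
- by rewrite rcons_uniq fnot Us.
- by rewrite all_rcons As andbT; exact: fin.
- by rewrite /= rcons_path; apply/andP; split; [exact: Ss | rewrite /R fs].
Qed.

Definition rank (s : seq nat) (x : nat) := count (fun y => y <= x) s.
Definition std (s : seq nat) := map (rank s) s.
Definition ext (a : seq nat) (j : nat) := rcons (map (fun y => y + (j <= y)) a) j.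

Lemma count_split (T : Type) (a b : pred T) s :
  count a s = count (fun x => a x && b x) s + count (fun x => a x && ~~ b x) s.
Proof. elim: s => //= x s ->; case: (a x); case: (b x) => /=; lia. Qed.

Lemma count_lt (T : eqType) (a b : pred T) s z : (forall x, a x -> b x) ->
  z \in s -> b z -> ~~ a z -> count a s < count b s.
Proof.
move=> AB; elim: s => // x s IH; rewrite inE => /orP[/eqP <-|zs] bz naz /=.
- rewrite bz (negbTE naz); have := sub_count AB s; lia.
- have := IH zs bz naz; case E: (a x); first by rewrite (AB x E); lia.
  case: (b x) => /=; lia.
Qed.

Lemma count_rcons (T : Type) (a : pred T) s x : count a (rcons s x) = count a s + a x.
Proof. by rewrite -cats1 count_cat /= addn0. Qed.

Lemma count_le_iota x m : x <= m -> count (fun y => y <= x) (iota 1 m) = x.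
Proof.
move=> H; rewrite -(subnKC H) iotaD count_cat.
rewrite (eq_in_count (a1 := fun y => y <= x) (a2 := predT)); last first.
  by move=> y; rewrite mem_iota => /andP[_]; rewrite /=; lia.
rewrite count_predT size_iota.
rewrite (eq_in_count (a1 := fun y => y <= x) (a2 := pred0)); last first.
  by move=> y; rewrite mem_iota /=; lia.
by rewrite count_pred0 addn0.
Qed.

Lemma rank_perm a m x : perm_eq a (iota 1 m) -> x \in a -> rank a x = x.
Proof.
move=> P xa; rewrite /rank (permP P) count_le_iota //.
by move: xa; rewrite (perm_mem P) mem_iota; lia.
Qed.

Lemma std_perm a m : perm_eq a (iota 1 m) -> std a = a.
Proof. by move=> P; rewrite /std -[RHS]map_id; apply/eq_in_map => x /(rank_perm P). Qed.

Lemma mono_le_in (s : seq nat) f : {in s &, forall x y, x < y -> f x < f y} ->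
  {in s &, forall x y, (f y <= f x) = (y <= x)}.
Proof.
move=> M x y xs ys; case: (ltngtP y x) => H.
- by have := M _ _ ys xs H; lia.
- by have := M _ _ xs ys H; lia.
- by rewrite H leqnn.
Qed.

Lemma std_mono (s : seq nat) f : {in s &, forall x y, x < y -> f x < f y} ->
  std (map f s) = std s.
Proof.
move=> M; rewrite /std -map_comp; apply/eq_in_map => x xs /=.
rewrite /rank count_map; apply: eq_in_count => y ys /=.
exact: (mono_le_in M).
Qed.

Lemma rank_lt s x y : y \in s -> x < y -> rank s x < rank s y.
Proof.
move=> ys lt; apply: (count_lt (z := y)) => //= [z|]; lia.
Qed.

Lemma rank_ge1 s x : x \in s -> 0 < rank s x.
Proof. by move=> xs; rewrite /rank -has_count; apply/hasP; exists x. Qed.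

Lemma rank_le_size s x : rank s x <= size s.
Proof. exact: count_size. Qed.

Lemma rank_inj s : {in s &, injective (rank s)}.
Proof.
move=> x y xs ys E; case: (ltngtP x y) => // H.
- by have := rank_lt ys H; rewrite E ltnn.
- by have := rank_lt xs H; rewrite E ltnn.
Qed.

Lemma std_is_perm s : uniq s -> perm_eq (std s) (iota 1 (size s)).
Proof.
move=> U.
have Us : uniq (std s) by rewrite /std map_inj_in_uniq //; exact: rank_inj.
apply: uniq_perm => //; first exact: iota_uniq.
have sub : {subset std s <= iota 1 (size s)}.
  move=> z /mapP[x xs ->]; rewrite mem_iota.
  have := rank_ge1 xs; have := rank_le_size s x; move=> A B; apply/andP; split => //; lia.
have Hs : size (iota 1 (size s)) <= size (std s) by rewrite size_map size_iota.
by have [_ E] := uniq_min_size Us sub Hs.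
Qed.

Lemma std_uniq s : uniq s -> uniq (std s).
Proof. by move=> U; rewrite (perm_uniq (std_is_perm U)) iota_uniq. Qed.

Lemma size_std s : size (std s) = size s.
Proof. by rewrite size_map. Qed.

Lemma std_rcons s x : uniq s -> x \notin s ->
  std (rcons s x) = ext (std s) (count (fun y => y < x) s).+1.
Proof.
move=> U xn.
have cx : count (fun y => y <= x) s = count (fun y => y < x) s.
  apply: eq_in_count => y ys /=; have : y != x by apply: contraNneq xn => <-.
  lia.
rewrite /std /ext map_rcons /rank count_rcons leqnn cx addn1; congr rcons.
rewrite -map_comp; apply/eq_in_map => z zs /=.
rewrite count_rcons; congr addn.
have zx : z != x by apply: contraNneq xn => <-.
case: (ltngtP x z) => H.
- have : count (fun y => y < x) s < count (fun y => y <= z) s.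
    by apply: (count_lt (z := z)) => //= [y|]; lia.
  by move=> ->.
- have : count (fun y => y <= z) s <= count (fun y => y < x) s.
    by apply: sub_count => y /=; lia.
  by move=> L; rewrite ltnNge L.
- by move: zx; rewrite H eqxx.
Qed.

Definition perms k := permutations (iota 1 k).
Definition src m (p : seq nat) := std (take m p).
Definition dst (p : seq nat) := std (behead p).

Lemma perm_size_iota a k : perm_eq a (iota 1 k) -> size a = k.
Proof. by move/perm_size; rewrite size_iota. Qed.

Lemma perm_uniq_iota a k : perm_eq a (iota 1 k) -> uniq a.
Proof. by move/perm_uniq->; exact: iota_uniq. Qed.

Lemma mem_perm_iota a k x : perm_eq a (iota 1 k) -> (x \in a) = (0 < x <= k).
Proof. by move/perm_mem->; rewrite mem_iota; lia. Qed.

Lemma ext_std a m j : perm_eq a (iota 1 m) -> 0 < j <= m.+1 ->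
  ext a j = std (rcons (map (fun y => 2 * y) a) (2 * j - 1)).
Proof.
move=> P Hj.
have U : uniq (map (fun y => 2 * y) a) by rewrite map_inj_uniq ?(perm_uniq_iota P) // => x y; lia.
have N : 2 * j - 1 \notin map (fun y => 2 * y) a.
  by apply/mapP => -[y _]; lia.
rewrite std_rcons // std_mono; last by move=> x y _ _; lia.
rewrite (std_perm P) count_map.
rewrite (eq_count (a2 := fun y => y <= j.-1)); last by move=> y /=; lia.
by rewrite (permP P) count_le_iota; [congr ext; lia | lia].
Qed.

Lemma ext_perm a m j : perm_eq a (iota 1 m) -> 0 < j <= m.+1 ->
  perm_eq (ext a j) (iota 1 m.+1).
Proof.
move=> P Hj; rewrite (ext_std P Hj).
have U : uniq (map (fun y => 2 * y) a) by rewrite map_inj_uniq ?(perm_uniq_iota P) // => x y; lia.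
have N : 2 * j - 1 \notin map (fun y => 2 * y) a.
  by apply/mapP => -[y _]; lia.
have := std_is_perm (s := rcons (map (fun y => 2 * y) a) (2 * j - 1)).
by rewrite rcons_uniq N U size_rcons size_map (perm_size_iota P) => ->.
Qed.

Lemma src_ext a m j : perm_eq a (iota 1 m) -> src m (ext a j) = a.
Proof.
move=> P; rewrite /src /ext -cats1 take_size_cat ?size_map ?(perm_size_iota P) //.
by rewrite std_mono ?(std_perm P) // => x y _ _; lia.
Qed.

Lemma last_ext a j : last 0 (ext a j) = j.
Proof. by rewrite /ext last_rcons. Qed.

Lemma perm_ext p m : perm_eq p (iota 1 m.+1) ->
  p = ext (src m p) (last 0 p) /\ 0 < last 0 p <= m.+1.
Proof.
move=> P.
have Hs := perm_size_iota P.
have U := perm_uniq_iota P.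
move: P Hs U; case/lastP: p => [|t j] //.
rewrite size_rcons rcons_uniq last_rcons => P [Hs] /andP[jn Ut].
have jin : j \in rcons t j by rewrite mem_rcons inE eqxx.
have Hj : 0 < j <= m.+1 by rewrite -(mem_perm_iota _ P).
split => //.
rewrite /src -cats1 take_size_cat // cats1.
have E := std_perm P.
rewrite -{1}E std_rcons //; congr ext.
have : count (fun y => y <= j.-1) (rcons t j) = j.-1.
  by rewrite (permP P) count_le_iota; lia.
rewrite count_rcons (eq_count (a2 := fun y => y < j)); last by move=> y /=; lia.
have -> : (j <= j.-1) = false by lia.
lia.
Qed.

Lemma src_perm m p : perm_eq p (iota 1 m.+1) -> perm_eq (src m p) (iota 1 m).
Proof.
move=> P; have := std_is_perm (s := take m p).
rewrite size_takel ?(perm_size_iota P) //; apply.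
by apply: take_uniq; exact: perm_uniq_iota P.
Qed.

Lemma dst_perm m p : perm_eq p (iota 1 m.+1) -> perm_eq (dst p) (iota 1 m).
Proof.
move=> P; have := std_is_perm (s := behead p).
rewrite size_behead (perm_size_iota P) /=; apply.
by have := perm_uniq_iota P; case: p {P} => //= x s /andP[].
Qed.

Lemma ext_inj a j1 j2 : ext a j1 = ext a j2 -> j1 = j2.
Proof. by move=> E; have := last_ext a j1; rewrite E last_ext. Qed.

Lemma out_count m v : count (fun p => src m p == v) (perms m.+1) = (v \in perms m) * m.+1.
Proof.
case: (boolP (v \in perms m)) => vin; last first.
  rewrite mul0n; apply/eqP; rewrite -leqn0 leqNgt -has_count; apply/hasP => -[p pin /eqP E].
  move: pin vin; rewrite /perms !mem_permutations => /src_perm; rewrite E => ->.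
  done.
move: (vin); rewrite /perms mem_permutations => Pv.
rewrite mul1n -size_filter.
have -> : size [seq p <- permutations (iota 1 m.+1) | src m p == v] =
          size (map (ext v) (iota 1 m.+1)).
  apply: perm_size; apply: uniq_perm.
  - by apply: filter_uniq; exact: permutations_uniq.
  - rewrite map_inj_in_uniq ?iota_uniq // => x y _ _; exact: ext_inj.
  move=> p; rewrite mem_filter mem_permutations; apply/idP/idP.
    case/andP => /eqP E P; have [Ep Hl] := perm_ext P.
    apply/mapP; exists (last 0 p); first by rewrite mem_iota; lia.
    by rewrite {1}Ep E.
  case/mapP => j; rewrite mem_iota => Hj ->.
  rewrite src_ext // eqxx /=; apply: ext_perm => //; lia.
by rewrite size_map size_iota.
Qed.

Lemma std_rev s : std (rev s) = rev (std s).
Proof.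
rewrite /std map_rev; congr rev; apply/eq_map => x.
by rewrite /rank count_rev.
Qed.

Lemma std_rot k s : std (rot k s) = rot k (std s).
Proof.
rewrite /std map_rot; congr rot; apply/eq_map => x.
have Pr : perm_eq (rot k s) s by rewrite perm_rot.
by rewrite /rank (permP Pr).
Qed.

Lemma rev_inj (T : Type) : injective (@rev T).
Proof. exact: (inv_inj (@revK T)). Qed.

Lemma dst_rev m p : size p = m.+1 -> dst p = rev (src m (rev p)).
Proof.
move=> Hs; rewrite /src /dst take_rev Hs subSnn drop1 std_rev revK //.
Qed.

Lemma in_count m v : count (fun p => dst p == v) (perms m.+1) = (v \in perms m) * m.+1.
Proof.
have -> : count (fun p => dst p == v) (perms m.+1) =
          count (fun p => src m (rev p) == rev v) (perms m.+1).
  apply: eq_in_count => p; rewrite /perms mem_permutations => P.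
  rewrite (dst_rev (perm_size_iota P)).
  by rewrite -(inj_eq (@rev_inj nat)) revK.
rewrite -(count_map rev (fun p => src m p == rev v)).
have Pm : perm_eq (map rev (perms m.+1)) (perms m.+1).
  apply: uniq_perm.
  - rewrite map_inj_uniq; [exact: permutations_uniq | exact: (@rev_inj nat)].
  - exact: permutations_uniq.
  move=> p; apply/mapP/idP.
    by case=> q; rewrite /perms !mem_permutations => Q ->; rewrite perm_rev.
  by move=> H; exists (rev p); rewrite ?revK //; move: H; rewrite /perms !mem_permutations perm_rev.
rewrite (permP Pm) out_count; congr muln.
by rewrite /perms !mem_permutations perm_rev.
Qed.

Lemma dst_ext_head a m : perm_eq a (iota 1 m) -> 0 < m ->
  dst (ext a (head 0 a)) = rot 1 a /\ dst (ext a (head 0 a).+1) = rot 1 a.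
Proof.
move=> P Hm.
have U := perm_uniq_iota P.
have Pr : perm_eq (rot 1 a) (iota 1 m) by rewrite perm_rot.
move: P U Pr; case: a => [|r b] P; first by move: (perm_size_iota P) => /= ?; lia.
rewrite /= => /andP[rn Ub]; rewrite rot1_cons => Pr.
split.
- rewrite /dst /ext /=.
  have -> : rcons (map (fun y => y + (r <= y)) b) r = map (fun y => y + (r < y)) (rcons b r).
    rewrite map_rcons ltnn addn0; congr rcons; apply/eq_in_map => y yb.
    have : y != r by apply: contraNneq rn => <-.
    lia.
  by rewrite std_mono ?(std_perm Pr) // => x y _ _; lia.
- rewrite /dst /ext /=.
  have -> : rcons (map (fun y => y + (r.+1 <= y)) b) r.+1 = map (fun y => y + (r <= y)) (rcons b r).
    rewrite map_rcons leqnn addn1; congr rcons; apply/eq_in_map => y yb.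
    have : y != r by apply: contraNneq rn => <-.
    lia.
  by rewrite std_mono ?(std_perm Pr) // => x y _ _; lia.
Qed.

Definition partner (a : seq nat) := ext a (head 0 a).+1.
Definition kept (a : seq nat) := ext a (head 0 a).
Definition Pset (S : seq (seq nat)) := map partner S.
Definition edges m S := filter (fun p => p \notin Pset S) (perms m.+1).
Definition subst m S p := if p \in Pset S then kept (src m p) else p.

Definition goodS m (S : seq (seq nat)) :=
  [/\ 0 < m, uniq S, {subset S <= perms m} & perm_eq (map (rot 1) S) S].

Lemma head_perm a m : perm_eq a (iota 1 m) -> 0 < m -> 0 < head 0 a <= m.
Proof.
move=> P Hm; rewrite -(mem_perm_iota _ P).
by case: a P => [|x a] P /=; [move: (perm_size_iota P) => /=; lia | rewrite inE eqxx].
Qed.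

Lemma partner_perm m a : 0 < m -> a \in perms m -> partner a \in perms m.+1.
Proof.
rewrite /perms !mem_permutations => Hm P; apply: ext_perm => //.
have := head_perm P Hm; lia.
Qed.

Lemma kept_perm m a : 0 < m -> a \in perms m -> kept a \in perms m.+1.
Proof.
rewrite /perms !mem_permutations => Hm P; apply: ext_perm => //.
have := head_perm P Hm; lia.
Qed.

Lemma src_partner m a : a \in perms m -> src m (partner a) = a.
Proof. by rewrite /perms mem_permutations => P; rewrite src_ext. Qed.

Lemma src_kept m a : a \in perms m -> src m (kept a) = a.
Proof. by rewrite /perms mem_permutations => P; rewrite src_ext. Qed.

Lemma cnt_sub (T : eqType) (a : pred T) s P : uniq s -> uniq P -> {subset P <= s} ->
  count (fun x => a x && (x \in P)) s = count a P.
Proof.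
move=> Us UP sub.
have Pf : perm_eq (filter (mem P) s) P.
  apply: uniq_perm => //; first exact: filter_uniq.
  by move=> x; rewrite mem_filter; apply/andP/idP => [[]//|xP]; split => //; apply: sub.
by rewrite -(permP Pf) count_filter.
Qed.

Section Merged.

Lemma Pset_uniq m S : goodS m S -> uniq (Pset S).
Proof.
case=> Hm US sub _; rewrite map_inj_in_uniq // => a b aS bS E.
by rewrite -(src_partner (sub _ aS)) E src_partner //; apply: sub.
Qed.

Lemma Pset_sub m S : goodS m S -> {subset Pset S <= perms m.+1}.
Proof. by case=> Hm _ sub _ p /mapP[a aS ->]; apply: partner_perm => //; apply: sub. Qed.

Lemma edges_uniq m S : uniq (edges m S).
Proof. by apply: filter_uniq; exact: permutations_uniq. Qed.

Lemma count_edges m S (a : pred (seq nat)) : goodS m S ->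
  count a (edges m S) + count a (Pset S) = count a (perms m.+1).
Proof.
move=> G; rewrite /edges count_filter.
have A : count a (perms m.+1) = count (fun x => a x && (x \in Pset S)) (perms m.+1)
   + count (fun x => a x && ~~ (x \in Pset S)) (perms m.+1) := count_split _ _ _.
rewrite A (cnt_sub _ (permutations_uniq _) (Pset_uniq G) (Pset_sub G)) addnC.
by congr addn; apply: eq_count.
Qed.

Lemma balance m S v : goodS m S ->
  count (fun e => src m e == v) (edges m S) = count (fun e => dst e == v) (edges m S).
Proof.
move=> G; case: (G) => Hm US sub Rot.
have H1 := count_edges (fun e => src m e == v) G.
have H2 := count_edges (fun e => dst e == v) G.
rewrite out_count in H1; rewrite in_count in H2.
have E1 : count (fun e => src m e == v) (Pset S) = count (pred1 v) S.
  rewrite /Pset count_map; apply: eq_in_count => a aS /=.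
  by rewrite src_partner //; apply: sub.
have E2 : count (fun e => dst e == v) (Pset S) = count (pred1 v) S.
  rewrite /Pset count_map -(permP Rot) count_map; apply: eq_in_count => a aS /=.
  have := sub _ aS; rewrite /perms mem_permutations => P.
  by have [_ ->] := dst_ext_head P Hm.
lia.
Qed.

Lemma subst_props m S p : goodS m S -> p \in perms m.+1 ->
  [/\ src m (subst m S p) = src m p, dst (subst m S p) = dst p & subst m S p \in edges m S].
Proof.
move=> G pin; case: (G) => Hm US sub Rot.
rewrite /subst; case: ifP => pP; last by rewrite /edges mem_filter pP.
case/mapP: pP => a aS ->.
have ain := sub _ aS.
have Pa : perm_eq a (iota 1 m) by move: ain; rewrite /perms mem_permutations.
rewrite src_partner //; split.
- by rewrite src_kept.
- by have [-> ->] := dst_ext_head Pa Hm.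
- rewrite /edges mem_filter kept_perm // andbT; apply/mapP => -[b bS E].
  have bin := sub _ bS.
  have Eb : a = b by rewrite -(src_kept ain) E src_partner.
  move: E; rewrite -Eb /kept /partner => /ext_inj; lia.
Qed.

Lemma walk_subst m S x c y : goodS m S -> all (mem (perms m.+1)) c ->
  walk (src m) dst x c y -> walk (src m) dst x (map (subst m S) c) y /\ all (mem (edges m S)) (map (subst m S) c).
Proof.
move=> G; elim: c x => [|p c IH] x //= /andP[pin Ac] /andP[/eqP sp W].
have [s1 d1 e1] := subst_props G pin.
have [W2 A2] := IH _ Ac W.
by rewrite s1 sp eqxx d1 W2 e1 A2.
Qed.

End Merged.

Lemma walk_cons (T V : eqType) (src dst : T -> V) v e c w :
  walk src dst v (e :: c) w = (src e == v) && walk src dst (dst e) c w.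
Proof. by []. Qed.

Lemma std_rank_sub s t : uniq s -> {subset t <= s} -> std (map (rank s) t) = std t.
Proof.
move=> U sub; apply: std_mono => x y xt yt lt.
by apply: rank_lt => //; apply: sub.
Qed.

Lemma src_std m s : uniq s -> src m (std s) = std (take m s).
Proof.
move=> U; rewrite /src /std -map_take; apply: std_rank_sub => // x; exact: mem_take.
Qed.

Lemma dst_std s : uniq s -> dst (std s) = std (behead s).
Proof.
move=> U; rewrite /dst /std behead_map; apply: std_rank_sub => // x; exact: mem_behead.
Qed.

Definition wordwalk m (z : seq nat) :=
  [seq std (take m.+1 (drop i z)) | i <- iota 0 (size z - m)].

Lemma walk_word m z : uniq z -> m <= size z ->
  walk (src m) dst (std (take m z)) (wordwalk m z) (std (drop (size z - m) z)) /\
  all (mem (perms m.+1)) (wordwalk m z).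
Proof.
elim: z => [|a z IH] U Hs.
  by rewrite /wordwalk /= eqxx.
case: (ltnP m (size (a :: z))) => Hlt; last first.
  have E : size (a :: z) = m by lia.
  by rewrite /wordwalk E subnn /= -E take_size eqxx.
have Uz : uniq z by case/andP: U.
have Hz : m <= size z by move: Hlt => /=; lia.
have [W A] := IH Uz Hz.
have Ht : uniq (take m.+1 (a :: z)) by apply: take_uniq.
have Sz : size (a :: z) - m = (size z - m).+1 by move: Hlt => /= Hlt; lia.
have Ew : wordwalk m (a :: z) = std (take m.+1 (a :: z)) :: wordwalk m z.
  have I1 : iota 1 (size z - m) = map (addn 1) (iota 0 (size z - m)) by rewrite -iotaDl.
  rewrite /wordwalk Sz /= I1 -map_comp.
  congr cons; apply: eq_map => i /=; rewrite addn1 //.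
rewrite Ew Sz walk_cons.
have T1 : take m (take m.+1 (a :: z)) = take m (a :: z) by rewrite take_takel.
have T2 : behead (take m.+1 (a :: z)) = take m z by [].
have T3 : drop (size z - m).+1 (a :: z) = drop (size z - m) z by [].
split.
  by rewrite src_std // T1 eqxx dst_std // T2 T3.
rewrite /= A andbT /perms mem_permutations.
by have := std_is_perm Ht; rewrite size_takel.
Qed.

Lemma connect_edges m S x y : goodS m S -> x \in perms m -> y \in perms m ->
  exists c, all (mem (edges m S)) c /\ walk (src m) dst x c y.
Proof.
move=> G; rewrite /perms !mem_permutations => Px Py.
set z := x ++ map (addn m) y.
have Sx := perm_size_iota Px; have Sy := perm_size_iota Py.
have Uz : uniq z.
  rewrite cat_uniq (perm_uniq_iota Px) map_inj_uniq ?(perm_uniq_iota Py) //=; last first.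
    by move=> u v; lia.
  rewrite andbT; apply/hasPn => w /mapP[u uy ->].
  have := mem_perm_iota u Py; rewrite uy (mem_perm_iota _ Px); lia.
have Hs : size z = m + m by rewrite size_cat size_map Sx Sy.
have Hm : m <= size z by rewrite Hs leq_addr.
have [W A] := walk_word Uz Hm.
have [W2 A2] := walk_subst G A W.
exists (map (subst m S) (wordwalk m z)); split => //.
move: W2; rewrite Hs addnK /z take_size_cat // drop_size_cat //.
rewrite (std_perm Px) std_mono ?(std_perm Py) //.
by move=> u v _ _; lia.
Qed.

Lemma coversP w p : reflect (size w = size p /\
   forall i j, i < size w -> j < size w -> nth 0 w i < nth 0 w j -> nth 0 p i < nth 0 p j)
  (covers w p).
Proof.
apply: (iffP andP) => [[/eqP Hs /forallP H]|[Hs H]]; split => //.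
- move=> i j Hi Hj; have := H (Ordinal Hi); move/forallP/(_ (Ordinal Hj)) => /implyP; exact.
- by apply/eqP.
- apply/forallP => i; apply/forallP => j; apply/implyP; exact: H.
Qed.

Lemma covers_map w p f : (forall x y, (f x < f y) = (x < y)) -> covers (map f w) p = covers w p.
Proof.
move=> M; apply/coversP/coversP; rewrite size_map => -[Hs H]; split => // i j Hi Hj.
- by move=> L; apply: H => //; rewrite !(nth_map 0) // M.
- by rewrite !(nth_map 0) // M; exact: H.
Qed.

Lemma count_nth (T : Type) (x0 : T) (a : pred T) s :
  count a s = count (fun k => a (nth x0 s k)) (iota 0 (size s)).
Proof. by have := count_map (nth x0 s) a (iota 0 (size s)); rewrite -/(mkseq _ _) mkseq_nth. Qed.

Lemma covers_std w p : uniq w -> perm_eq p (iota 1 (size w)) -> covers w p = (p == std w).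
Proof.
move=> U P; have Sp := perm_size_iota P.
apply/idP/eqP => [/coversP [Hs H]|->].
  apply: (@eq_from_nth _ 0); first by rewrite size_std.
  move=> i; rewrite Sp => Hi.
  rewrite /std (nth_map 0) // -(rank_perm P (mem_nth 0 _)); last by rewrite Sp.
  rewrite /rank (count_nth 0 _ p) (count_nth 0 _ w) Sp.
  apply: eq_in_count => k; rewrite mem_iota add0n => Hk /=.
  case: (ltngtP (nth 0 w k) (nth 0 w i)) => C.
  - by have := H _ _ Hk Hi C; lia.
  - by have := H _ _ Hi Hk C; lia.
  - have : k = i by apply/eqP; rewrite -(nth_uniq 0 Hk Hi U); apply/eqP.
    by move=> ->; rewrite leqnn.
apply/coversP; split; first by rewrite size_std.
move=> i j Hi Hj L; rewrite /std !(nth_map 0) //.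
by apply: rank_lt => //; exact: mem_nth.
Qed.

Lemma covers_merged w p : uniq w -> 0 < size w -> all (fun x => 0 < x) w -> uniq p ->
  size p = (size w).+1 ->
  covers (rcons (map (fun y => 2 * y) w) (2 * head 0 w)) p =
  covers (rcons (map (fun y => 2 * y) w) (2 * head 0 w).+1) p ||
  covers (rcons (map (fun y => 2 * y) w) (2 * head 0 w).-1) p.
Proof.
move=> Uw Sw Pw Up Sp.
set W := map (fun y => 2 * y) w; set h := head 0 w.
have SW : size W = size w by rewrite size_map.
have nW : forall i, i < size w -> nth 0 W i = 2 * nth 0 w i by move=> i Hi; rewrite (nth_map 0).
have h0 : nth 0 w 0 = h by rewrite nth0.
have hpos : 0 < h by move: Pw Sw; rewrite /h; case: (w) => //= x s /andP[].
have wpos : forall i, i < size w -> 0 < nth 0 w i by move=> i Hi; apply: (allP Pw); exact: mem_nth.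
have nR : forall x i, nth 0 (rcons W x) i = if i < size w then 2 * nth 0 w i else if i == size w then x else 0.
  by move=> x i; rewrite nth_rcons SW; case: ltnP => // Hi; rewrite nW.
have weq : forall i, i < size w -> nth 0 w i = h -> i = 0.
  move=> i Hi E; apply/eqP; rewrite -(nth_uniq 0 Hi Sw Uw) h0 E //.
apply/idP/orP.
- case/coversP; rewrite size_rcons SW => _ H.
  have Hsw : size w < (size w).+1 by [].
  have p0m : nth 0 p 0 != nth 0 p (size w).
    by rewrite (nth_uniq 0 _ _ Up) ?Sp; lia.
  case: (ltngtP (nth 0 p 0) (nth 0 p (size w))) => C; last by rewrite C eqxx in p0m.
  + left; apply/coversP; rewrite size_rcons SW; split => // i j Hi Hj.
    have := H i j Hi Hj; rewrite !nR.
    case: (ltnP i (size w)) => Hi'; case: (ltnP j (size w)) => Hj' //.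
    * have -> : j = size w by lia.
      rewrite eqxx => H1 L.
      case: (ltngtP (nth 0 w i) h) => C2; first by apply: H1; lia.
      - by lia.
      - by move: C; rewrite (weq _ Hi' C2).
    * have -> : i = size w by lia.
      rewrite eqxx => H1 L; apply: H1.
      case: (ltnP j (size w)) => Hj2; [lia|]; lia.
    * have -> : i = size w by lia.
      have -> : j = size w by lia.
      by move=> _; rewrite eqxx ltnn.
  + right; apply/coversP; rewrite size_rcons SW; split => // i j Hi Hj.
    have := H i j Hi Hj; rewrite !nR.
    case: (ltnP i (size w)) => Hi'; case: (ltnP j (size w)) => Hj' //.
    * have -> : j = size w by lia.
      rewrite eqxx => H1 L; apply: H1; lia.
    * have -> : i = size w by lia.
      rewrite eqxx => H1 L.
      case: (ltngtP h (nth 0 w j)) => C2; first by apply: H1; lia.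
      - by lia.
      - by move: C; rewrite (weq _ Hj' (esym C2)).
    * have -> : i = size w by lia.
      have -> : j = size w by lia.
      by move=> _; rewrite eqxx ltnn.
- case=> /coversP; rewrite size_rcons SW => -[Hs H]; apply/coversP;
    rewrite size_rcons SW; split => // i j Hi Hj L; apply: H => //; move: L; rewrite !nR.
  + case: (ltnP i (size w)) => Hi'; case: (ltnP j (size w)) => Hj' //.
    * have -> : j = size w by lia.
      by rewrite eqxx; lia.
    * have -> : i = size w by lia.
      by rewrite eqxx; lia.
    * have -> : i = size w by lia.
      have -> : j = size w by lia.
      by rewrite eqxx ltnn.
  + case: (ltnP i (size w)) => Hi'; case: (ltnP j (size w)) => Hj' //.
    * have -> : j = size w by lia.
      by rewrite eqxx; lia.
    * have -> : i = size w by lia.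
      by rewrite eqxx; lia.
    * have -> : i = size w by lia.
      have -> : j = size w by lia.
      by rewrite eqxx ltnn.
Qed.

Definition dbl (s : seq nat) := map (fun y => 2 * y) s.

Lemma factor_old L x i m : i + m.+1 <= size L ->
  factor (rcons (dbl L) x) i m.+1 = dbl (factor L i m.+1).
Proof.
move=> H; rewrite /factor /dbl -cats1 drop_cat size_map.
have -> : i < size L by lia.
rewrite takel_cat ?size_drop ?size_map; last by lia.
by rewrite map_take map_drop.
Qed.

Lemma factor_new L x t m : size L = t + m ->
  factor (rcons (dbl L) x) t m.+1 = rcons (dbl (drop t L)) x.
Proof.
move=> H; rewrite /factor drop_rcons ?size_map; last by lia.
rewrite /dbl map_drop take_oversize // size_rcons size_drop size_map; lia.
Qed.

Lemma covers_dbl w p : covers (dbl w) p = covers w p.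
Proof. by apply: covers_map => x y; lia. Qed.

Lemma dist_step m u t x : dist_incomp m.+1 u -> size u = t + m ->
  ((exists y, x = 2 * y + 1) \/ x = 2 * nth 0 u t) ->
  dist_incomp m.+1 (rcons (dbl u) x).
Proof.
move=> Hd Hs Hx i j /andP[ij]; rewrite size_rcons size_map => jlt.
rewrite !nth_rcons !size_map.
have iu : i < size u by lia.
rewrite iu (nth_map 0) //.
case: (ltnP j (size u)) => ju.
  rewrite (nth_map 0) // => E.
  by apply: Hd; [rewrite ij ju | lia].
have -> : j == size u by lia.
move=> E; case: Hx => [[y Ey]|Ex]; first by lia.
have E2 : nth 0 u i = nth 0 u t by lia.
case: (leqP i t) => it; first by lia.
have := Hd t i; rewrite it /=.
have -> : i < size u by lia.
by move=> /(_ isT (esym E2)); lia.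
Qed.

Lemma window_uniq m u t : dist_incomp m.+1 u -> size u = t + m -> uniq (drop t u).
Proof.
move=> Hd Hs; apply/(uniqP 0) => a b Ha Hb.
have Ha' : a < m by move: Ha; rewrite inE /= size_drop; lia.
have Hb' : b < m by move: Hb; rewrite inE /= size_drop; lia.
rewrite !nth_drop => E.
case: (ltngtP a b) => C //.
- have H1 : t + a < t + b < size u by lia.
  by have := Hd _ _ H1 E; lia.
- have H1 : t + b < t + a < size u by lia.
  by have := Hd _ _ H1 (esym E); lia.
Qed.

Lemma pick_x w m j : uniq w -> all (fun z => 0 < z) w -> perm_eq (std w) (iota 1 m) ->
  0 < j <= m.+1 -> exists y, count (fun z => z < 2 * y + 1) (dbl w) = j.-1.
Proof.
move=> U Pw P Hj.
case: (posnP j.-1) => Hj1.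
  exists 0; rewrite Hj1 /dbl count_map; apply/eqP; rewrite -leqn0 leqNgt -has_count.
  by apply/hasPn => z zw /=; have := allP Pw z zw; lia.
have : j.-1 \in std w by rewrite (mem_perm_iota _ P); lia.
case/mapP => z zw Ez; exists z.
rewrite Ez /dbl /rank count_map; apply: eq_count => y /=; lia.
Qed.

Lemma rank_head w : 0 < size w -> head 0 (std w) = rank w (head 0 w).
Proof. by case: w. Qed.

Lemma rank_lt1 w h : uniq w -> h \in w -> count (fun y => y < h) w = (rank w h).-1.
Proof.
move=> U hw; rewrite /rank (count_split (fun y => y <= h) (fun y => y < h)).
have -> : count (fun y => (y <= h) && (y < h)) w = count (fun y => y < h) w.
  by apply: eq_count => y /=; lia.
have -> : count (fun y => (y <= h) && ~~ (y < h)) w = count (pred1 h) w.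
  by apply: eq_count => y /=; lia.
by rewrite count_uniq_mem // hw; lia.
Qed.

Definition mg m (S : seq (seq nat)) (p : seq nat) := (src m p \in S) && (last 0 p == head 0 (src m p)).
Definition cov m (S : seq (seq nat)) (p : seq nat) :=
  p :: (if mg m S p then [:: partner (src m p)] else [::]).

Lemma odd1 h y : (2 * h).+1 <> 2 * y.
Proof. lia. Qed.
Lemma odd2 h y : 0 < h -> (2 * h).-1 <> 2 * y.
Proof. lia. Qed.
Lemma odd3 y z : 2 * y + 1 <> 2 * z.
Proof. lia. Qed.
Lemma dbl_std w : std (dbl w) = std w.
Proof. by rewrite /dbl std_mono // => x y _ _; lia. Qed.
Lemma dbl_uniq w : uniq w -> uniq (dbl w).
Proof. by move=> U; rewrite map_inj_uniq // => x y; lia. Qed.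
Lemma cnt1 w h : count (fun y => y < (2 * h).+1) (map (fun y => 2 * y) w) = rank w h.
Proof. by rewrite count_map /rank; apply: eq_count => y /=; lia. Qed.
Lemma cnt2 w h : uniq w -> h \in w -> 0 < h ->
  count (fun y => y < (2 * h).-1) (map (fun y => 2 * y) w) = (rank w h).-1.
Proof. by move=> U hw hp; rewrite count_map -(rank_lt1 U hw); apply: eq_count => y /=; lia. Qed.
Lemma ar1 i t m u : i < t -> u = t + m -> i + m.+1 <= u.
Proof. lia. Qed.
Lemma ar2 i t : i < t.+1 -> t <= i -> i = t.
Proof. lia. Qed.
Lemma ar3 t m u : 0 < m -> u = t + m -> t < u.
Proof. lia. Qed.
Lemma ar4 y : 0 < 2 * y + 1.
Proof. lia. Qed.
Lemma ar5 y : 0 < y -> 0 < 2 * y.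
Proof. lia. Qed.

Lemma sorted_nth (T : Type) (x0 : T) (r : rel T) s i : sorted r s -> i.+1 < size s ->
  r (nth x0 s i) (nth x0 s i.+1).
Proof.
case: s => [|y s] //= /(pathP x0) H Hi; exact: H.
Qed.

Lemma realize m S s : goodS m S -> perm_eq s (edges m S) ->
  sorted (fun a b => dst a == src m b) s -> 0 < size s ->
  forall t, t <= size s -> exists u,
    [/\ size u = t + m, pos_word u, dist_incomp m.+1 u,
        (forall i p, i < t -> is_nperm m.+1 p ->
           covers (factor u i m.+1) p = (p \in cov m S (nth [::] s i)))
      & (t < size s -> std (drop t u) = src m (nth [::] s t))].
Proof.
move=> G Ps Ss Hs0.
have Gm : 0 < m by case: G.
have inP : forall i, i < size s -> perm_eq (nth [::] s i) (iota 1 m.+1).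
  move=> i Hi; have : nth [::] s i \in edges m S by rewrite -(perm_mem Ps) mem_nth.
  by rewrite /edges mem_filter /perms mem_permutations => /andP[].
elim=> [|t IH] Ht.
  have P0 := src_perm (inP 0 Hs0).
  exists (src m (nth [::] s 0)); split => //.
  - by rewrite (perm_size_iota P0).
  - by apply/allP => z; rewrite (mem_perm_iota _ P0); lia.
  - move=> i j /andP[ij jlt] E; exfalso.
    have := nth_uniq 0 (ltn_trans ij jlt) jlt (perm_uniq_iota P0).
    by rewrite E eqxx; lia.
  - by move=> _; rewrite drop0 (std_perm P0).
have [u [Hs Hp Hd Hc Hn]] := IH (ltnW Ht).
have Pi := inP t Ht.
set pi := nth [::] s t in Pi Hn *.
have Hw := Hn Ht.
set w := drop t u in Hw.
set a := src m pi in Hw.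
have Pa : perm_eq a (iota 1 m) := src_perm Pi.
have Uw : uniq w := window_uniq Hd Hs.
have Sw : size w = m by rewrite size_drop; lia.
have Pw : all (fun z => 0 < z) w by apply/allP => z /mem_drop; apply/allP.
have [Epi Hl] := perm_ext Pi.
have Uw2 : uniq (dbl w) := dbl_uniq Uw.
have [x [Hx Hnew Hstd]] : exists x,
   [/\ (exists y, x = 2 * y + 1) \/ x = 2 * nth 0 u t,
       forall p, is_nperm m.+1 p -> covers (rcons (dbl w) x) p = (p \in cov m S pi)
     & std (behead (rcons (dbl w) x)) = dst pi].
  case Hmg: (mg m S pi).
  - exists (2 * head 0 w); split.
    + by right; rewrite /w -nth0 nth_drop addn0.
    + move=> p Pp.
      have Sp := perm_size_iota Pp.
      have S0 : 0 < size w by rewrite Sw.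
      have S1 : size p = (size w).+1 by rewrite Sw Sp.
      rewrite (covers_merged Uw S0 Pw (perm_uniq_iota Pp) S1).
      have hw : head 0 w \in w by rewrite -nth0 mem_nth // Sw.
      have N1 : (2 * head 0 w).+1 \notin dbl w by apply/mapP => -[y _]; apply: odd1.
      have N2 : (2 * head 0 w).-1 \notin dbl w.
        by apply/mapP => -[y _]; apply: odd2; exact: (allP Pw _ hw).
      rewrite !covers_std ?rcons_uniq ?N1 ?N2 ?Uw2 ?size_rcons ?size_map ?Sw //.
      have Dw : std (dbl w) = a by rewrite dbl_std Hw.
      rewrite (std_rcons Uw2 N1) (std_rcons Uw2 N2) Dw /dbl.
      have Er : head 0 a = rank w (head 0 w) by rewrite -Hw rank_head // Sw.
      have hp : 0 < head 0 w := allP Pw _ hw.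
      have r1 : 0 < head 0 a by case/andP: (head_perm Pa Gm).
      rewrite cnt1 (cnt2 Uw hw hp) -Er prednK //.
      rewrite /cov Hmg !inE orbC.
      move: Hmg; rewrite /mg => /andP[_ /eqP Hl2].
      have Epi2 : ext a (head 0 a) = pi by rewrite [RHS]Epi Hl2.
      by rewrite Epi2.
    + have -> : behead (rcons (dbl w) (2 * head 0 w)) = rot 1 (dbl w).
        rewrite /dbl; case: (w) Sw => [|y ys] /= E; last by rewrite rot1_cons.
        by move: Gm; rewrite -E.
      rewrite std_rot dbl_std Hw.
      move: Hmg; rewrite /mg => /andP[_ /eqP Hl2].
      rewrite Epi Hl2; have [-> _] := dst_ext_head Pa Gm; done.
  - have Pstd : perm_eq (std w) (iota 1 m) by rewrite Hw.
    have [y Hy] := pick_x Uw Pw Pstd Hl.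
    have N : 2 * y + 1 \notin dbl w by apply/mapP => -[z _]; apply: odd3.
    have Est : std (rcons (dbl w) (2 * y + 1)) = pi.
      rewrite std_rcons // Hy prednK; last by case/andP: Hl.
      by rewrite dbl_std Hw -Epi.
    exists (2 * y + 1); split.
    + by left; exists y.
    + move=> p Pp; rewrite covers_std ?rcons_uniq ?N ?Uw2 //; last first.
        by rewrite size_rcons size_map Sw.
      by rewrite Est /cov Hmg inE.
    + have U3 : uniq (rcons (dbl w) (2 * y + 1)) by rewrite rcons_uniq N Uw2.
      by rewrite -(dst_std U3) Est.
exists (rcons (dbl u) x); split.
- by rewrite size_rcons size_map Hs.
- rewrite /pos_word all_rcons; apply/andP; split.
    case: Hx => [[y ->]|->]; first exact: ar4.
    have : nth 0 u t \in u by rewrite mem_nth // (ar3 Gm Hs).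
    by move/(allP Hp); apply: ar5.
  by apply/allP => z /mapP[y /(allP Hp) yp ->]; apply: ar5.
- exact: dist_step Hd Hs Hx.
- move=> i p Hi Pp.
  case: (ltnP i t) => Hit.
    rewrite factor_old ?covers_dbl; last exact: (ar1 Hit Hs).
    exact: Hc.
  have -> : i = t by exact: ar2.
  rewrite factor_new //; exact: Hnew.
- move=> Ht2.
  rewrite -add1n -drop_drop drop_rcons; last by rewrite size_map Hs leq_addr.
  rewrite /dbl -map_drop -/w drop1 -/(dbl w) Hstd.
  by apply/eqP; apply: (sorted_nth [::] Ss).
Qed.

Lemma cov_count m S p : goodS m S -> p \in perms m.+1 ->
  count (fun q => p \in cov m S q) (edges m S) = 1.
Proof.
move=> G pin; case: (G) => Gm US sub Rot.
have [_ _ qin] := subst_props G pin.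
have -> : 1 = count_mem (subst m S p) (edges m S) by rewrite (count_uniq_mem _ (edges_uniq m S)) qin.
apply: eq_in_count => q qe /=.
move: (qe); rewrite /edges mem_filter => /andP[qP qperm].
have Pq : perm_eq q (iota 1 m.+1) by move: qperm; rewrite /perms mem_permutations.
rewrite /cov; case Hmg: (mg m S q); rewrite !inE ?orbF.
- move: (Hmg); rewrite /mg => /andP[sq /eqP lq].
  rewrite /subst; case: ifP => pP.
  + case/mapP: pP => a0 a0S Ep.
    have a0in := sub _ a0S.
    have Hpq : (p == q) = false by apply/negbTE; apply: contraNneq qP => <-; rewrite Ep map_f.
    rewrite Hpq /= Ep src_partner //.
    apply/eqP/eqP => [E|E].
    * have E2 : a0 = src m q by rewrite -(src_partner a0in) E src_partner //; apply: sub.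
      have [Eq _] := perm_ext Pq.
      by rewrite Eq lq -E2.
    * have Pa0 : perm_eq a0 (iota 1 m) by move: a0in; rewrite /perms mem_permutations.
      by rewrite E /kept (src_ext _ Pa0).
  + have Hn : (p == partner (src m q)) = false.
      by apply/negbTE; apply: contraFneq pP => ->; rewrite map_f.
    by rewrite Hn orbF eq_sym.
- rewrite /subst; case: ifP => pP.
  + case/mapP: pP => a0 a0S Ep.
    have a0in := sub _ a0S.
    have Hpq : (p == q) = false by apply/negbTE; apply: contraNneq qP => <-; rewrite Ep map_f.
    rewrite Hpq Ep src_partner //; apply/esym/negbTE; apply/eqP => E.
    move: Hmg; rewrite /mg E.
    have Pa0 : perm_eq a0 (iota 1 m) by move: a0in; rewrite /perms mem_permutations.
    by rewrite /kept src_ext // last_ext a0S eqxx.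
  + by rewrite eq_sym.
Qed.

Definition Sk q k := [seq rot t (rcons c q.+1) | c <- take k (perms q), t <- iota 0 q.+1].

Lemma iota_rc q : iota 1 q.+1 = rcons (iota 1 q) q.+1.
Proof. by rewrite -[q.+1]addn1 iotaD -cats1 add1n addn1. Qed.

Lemma rc_perm c q : perm_eq c (iota 1 q) -> perm_eq (rcons c q.+1) (iota 1 q.+1).
Proof. by move=> P; rewrite iota_rc -!cats1 perm_cat2r. Qed.

Lemma index_rot_rc c q t : perm_eq c (iota 1 q) -> t <= q ->
  index q.+1 (rot t (rcons c q.+1)) = q - t.
Proof.
move=> P Ht.
have Sc := perm_size_iota P.
have nc : q.+1 \notin c by rewrite (mem_perm_iota _ P); lia.
rewrite /rot drop_rcons ?Sc // index_cat mem_rcons inE eqxx /=.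
rewrite -cats1 index_cat (negbTE (contra (@mem_drop _ _ _ _) nc)) /= eqxx size_drop Sc.
by rewrite addn0.
Qed.

Lemma in_iota0 t q : t <= q -> t \in iota 0 q.+1.
Proof. by rewrite mem_iota; lia. Qed.

Lemma Sk_good q k : k <= q`! -> goodS q.+1 (Sk q k) /\ size (Sk q k) = k * q.+1.
Proof.
move=> Hk.
have Sp : size (perms q) = q`! by rewrite size_permutations ?iota_uniq // size_iota.
have inC : forall c, c \in take k (perms q) -> perm_eq c (iota 1 q).
  by move=> c /mem_take; rewrite /perms mem_permutations.
have Sb : forall c, c \in take k (perms q) -> size (rcons c q.+1) = q.+1.
  by move=> c /inC /perm_size_iota; rewrite size_rcons => ->.
have US : uniq (Sk q k).
  apply: allpairs_uniq; first by apply: take_uniq; exact: permutations_uniq.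
    exact: iota_uniq.
  move=> [c t] [c' t'] H1 H2.
  case/allpairsP: H1 => -[c1 t1] [c1in t1in [-> ->]].
  case/allpairsP: H2 => -[c2 t2] [c2in t2in [-> ->]] /= E.
  move: t1in t2in; rewrite !mem_iota /= => H1 H2 /=.
  have T1 : t1 <= q by lia.
  have T2 : t2 <= q by lia.
  have I1 := index_rot_rc (inC _ c1in) T1.
  have I2 := index_rot_rc (inC _ c2in) T2.
  rewrite E I2 in I1.
  have Et2 : t1 = t2 by lia.
  move: E; rewrite Et2 => /rot_inj /rcons_inj [->]; done.
split; last by rewrite size_allpairs size_takel ?Sp // size_iota.
split => //.
- move=> x /allpairsP[[c t] [cin tin ->]].
  by rewrite /perms mem_permutations perm_rot; apply: rc_perm; apply: inC.
- apply: uniq_perm => //; first by rewrite map_inj_uniq //; exact: rot_inj.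
  move=> x; apply/mapP/allpairsP.
  + case=> y /allpairsP[[c t] [cin tin ->]] ->.
    move: tin; rewrite mem_iota /= => Ht.
    case: (ltnP t q) => Htq.
      exists (c, t.+1); split; [exact: cin | by apply: in_iota0 |].
      by rewrite /= -rotD ?add1n // Sb.
    exists (c, 0); split; [exact: cin | by apply: in_iota0 |].
    have -> : t = q by lia.
    by rewrite rot0 -rotD add1n ?Sb // -{1}(Sb _ cin) rot_size.
  + case=> -[c t] [cin0 tin ->]; have cin : c \in take k (perms q) := cin0; clear cin0.
    move: tin; rewrite mem_iota /= => Ht.
    case: t Ht => [|t] Ht.
      exists (rot q (rcons c q.+1)); first by apply/allpairsP; exists (c, q); split; [exact: cin | apply: in_iota0 | by []].
      by rewrite rot0 -rotD add1n ?Sb // -{2}(Sb _ cin) rot_size.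
    exists (rot t (rcons c q.+1)); first by apply/allpairsP; exists (c, t); split; [exact: cin | apply: in_iota0; rewrite /=; lia | by []].
    by rewrite -rotD ?add1n // Sb //; lia.
Qed.

Unset Implicit Arguments.
Import GRing.Theory Num.Theory.

Lemma main_nat q k : k <= q`! -> exists u : seq nat,
    uword q.+2 u /\ dist_incomp q.+2 u /\ size u + k * q.+1 = q.+2`! + q.+1.
Proof.
move=> Hk.
set m := q.+1.
have [G HS] := Sk_good Hk.
set S := Sk q k in G HS.
have conn : forall e f, e \in edges m S -> f \in edges m S ->
   exists c, all (mem (edges m S)) c /\ walk (src m) dst (dst e) c (src m f).
  move=> e f; rewrite /edges !mem_filter /perms !mem_permutations => /andP[_ Pe] /andP[_ Pf].
  by apply: connect_edges G _ _; rewrite /perms mem_permutations; [apply: dst_perm | apply: src_perm].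
have [s [Ps Ss]] := euler (edges_uniq m S) (fun v => balance v G) conn.
have Hsz : size s + k * m = m.+1`!.
  have := count_edges predT G; rewrite !count_predT size_map HS (perm_size Ps).
  by rewrite size_permutations ?iota_uniq // size_iota.
have Hs0 : 0 < size s.
  have F1 : m`! = m * q`! := factS q.
  have F2 : m.+1`! = m.+1 * m`! := factS m.
  have F3 : 0 < q`! := fact_gt0 q.
  have F4 : k * m <= q`! * m by rewrite leq_mul2r Hk orbT.
  have F5 : m`! < m.+1`! by rewrite F2 -[X in X < _]mul1n ltn_mul2r ltnS /m ltn0Sn /= fact_gt0.
  move: Hsz; rewrite /m in F1 F4 F5 *; lia.
have [u [Hsu Hp Hd Hc _]] := realize G Ps Ss Hs0 (leqnn (size s)).
exists u; split; last split => //; last by rewrite Hsu -Hsz; lia.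
split => //; split; first by rewrite Hsu; lia.
move=> p Pp.
have -> : (size u - m.+1).+1 = size s by rewrite Hsu /m; lia.
rewrite (eq_in_count (a2 := fun i => p \in cov m S (nth [::] s i))); last first.
  by move=> i; rewrite mem_iota => Hi; apply: Hc => //; lia.
rewrite -(count_nth [::] (fun x => p \in cov m S x) s) (permP Ps).
by apply: cov_count G _; rewrite /perms mem_permutations.
Qed.

Local Open Scope ring_scope.

Theorem theorem1 (n k : nat) :
  (2 <= n)%N -> (k <= (n - 2)`!)%N ->
  exists u : seq nat,
    uword n u /\ dist_incomp n u /\
    (size u)%:Z = (n`!)%:Z + (1 - k%:Z) * (n - 1)%:Z.
Proof.
move=> Hn Hk.
have [q Eq] : exists q, n = q.+2 by exists (n - 2)%N; lia.
subst n.
have Hk' : (k <= q`!)%N by move: Hk; rewrite !subSS subn0.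
have [u [U [D S]]] := main_nat q k Hk'.
exists u; split => //; split => //.
have -> : (q.+2 - 1)%N = q.+1 by rewrite subn1.
have : ((size u)%:Z + (k * q.+1)%N%:Z = (q.+2`!)%:Z + (q.+1)%:Z).
  by rewrite -!PoszD S.
rewrite PoszM; lia.
Qed.
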